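(* Let $(\phi,F)$ be a special Kähler pair of an affine special Kähler manifold $M$ (of complex dimension $n$), $(z,w):=\phi$. Let $\hat M:=\mathbb{C}^*\times M$ with $\mathbb{C}^*$-action $\lambda\cdot(z^0,p)=(\lambda z^0,p)$. Then $$\Phi:\hat M\to\mathbb{C}^{2n+2},\qquad \Phi(z^0,p)=z^0\big(1,\,(2F-z^tw)(p),\,\phi(p)\big)$$ is a $\mathbb{C}^*$-equivariant Lagrangian immersion (with respect to $\hat\Omega=dz^0\wedge dw_0+\sum dz^i\wedge dw_i$ on $\mathbb{C}^{2n+2}$ with coordinates $(z^0,w_0,z,w)$).
   Context: $\mathbb{C}^{2n}$: coordinates $(z,w)$, $\Omega=\sum dz^i\wedge dw_i$, $\tau$ complex conjugation, $\gamma=\sqrt{-1}\Omega(\cdot,\tau\cdot)$, Liouville form $\lambda=\sum w_idz^i$. Affine special Kähler manifold $(M,J,g,\nabla)$: pseudo-Kähler with $\omega=g(\cdot,J\cdot)$ and flat torsion-free $\nabla$ with $\nabla\omega=0$, $d^\nabla J=0$. A special Kähler pair of an open $U\subset M$ is $(\phi,F)$ where $\phi:U\to\mathbb{C}^{2n}$ is a holomorphic immersion with $\phi^*\Omega=0$ and $\phi^*\gamma$ non-degenerate, inducing the given structure ($g=\mathrm{Re}\,\phi^*\gamma$, $\nabla$ the flat connection making $\mathrm{Re}\,\phi$'s components affine), and $F:U\to\mathbb{C}$ holomorphic with $dF=\phi^*\lambda$. *)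

(* Defs.v *)
From HB Require Import structures.
From mathcomp Require Import all_boot all_order all_algebra.
From mathcomp Require Import reals.
From mathcomp Require Import complex.
Set Implicit Arguments. Unset Strict Implicit. Unset Printing Implicit Defensive.
Import Order.TTheory GRing.Theory Num.Theory.
Local Open Scope ring_scope.

Section Defs.
Variable R : realType.
Local Notation C := R[i].

Definition cnorm (k : nat) (v : 'rV[C]_k) : C := \sum_(i < k) `|v 0 i|.

Definition copen (k : nat) (U : 'rV[C]_k -> Prop) : Prop :=
  forall p, U p -> exists2 r : R, 0 < r &
    forall q, cnorm (q - p) < (r%:C)%C -> U q.

Definition has_cderiv (k m : nat) (f : 'rV[C]_k -> 'rV[C]_m) (p : 'rV[C]_k)
  (L : 'M[C]_(k, m)) : Prop :=
  forall eps : R, 0 < eps -> exists2 delta : R, 0 < delta &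
    forall h : 'rV[C]_k, cnorm h < (delta%:C)%C ->
      cnorm (f (p + h) - f p - h *m L) <= (eps%:C)%C * cnorm h.

Definition holo_on (k m : nat) (U : 'rV[C]_k -> Prop)
  (f : 'rV[C]_k -> 'rV[C]_m) (df : 'rV[C]_k -> 'M[C]_(k, m)) : Prop :=
  forall p, U p -> has_cderiv f p (df p).

Definition zpart (k : nat) (x : 'rV[C]_(k + k)) : 'rV[C]_k := lsubmx x.
Definition wpart (k : nat) (x : 'rV[C]_(k + k)) : 'rV[C]_k := rsubmx x.

Definition Omega (k : nat) (a b : 'rV[C]_(k + k)) : C :=
  \sum_(i < k) (zpart a 0 i * wpart b 0 i - zpart b 0 i * wpart a 0 i).

Definition gamma (k : nat) (a b : 'rV[C]_(k + k)) : C :=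
  ('i)%C * Omega a (map_mx (fun z : C => z^*) b).

(* Liouville form lambda = sum_i w_i dz^i at the point x, applied to a *)
Definition liouville (k : nat) (x a : 'rV[C]_(k + k)) : C :=
  \sum_(i < k) wpart x 0 i * zpart a 0 i.

(* special Kaehler pair on an open set U of a chart C^n of M *)
Definition special_kaehler_pair (n : nat) (U : 'rV[C]_n -> Prop)
  (phi : 'rV[C]_n -> 'rV[C]_(n + n)) (dphi : 'rV[C]_n -> 'M[C]_(n, n + n))
  (F : 'rV[C]_n -> 'rV[C]_1) (dF : 'rV[C]_n -> 'M[C]_(n, 1)) : Prop :=
  [/\ holo_on U phi dphi,
      (forall p, U p -> row_free (dphi p)),
      (forall p, U p -> forall u v : 'rV[C]_n,
          Omega (u *m dphi p) (v *m dphi p) = 0),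
      (forall p, U p -> forall u : 'rV[C]_n,
          (forall v : 'rV[C]_n, gamma (u *m dphi p) (v *m dphi p) = 0) -> u = 0) &
      holo_on U F dF /\
      (forall p, U p -> forall u : 'rV[C]_n,
          (u *m dF p) 0 0 = liouville (phi p) (u *m dphi p))].

(* The map Phi on \hat M = C^* x U, a point being q = (z^0, p) in C^(1+n).
   Target C^(2n+2) = C^((1+n)+(1+n)) with z-coordinates (z^0, z) and
   w-coordinates (w_0, w), so that Omega on it is \hat Omega. *)
Definition z0of (n : nat) (q : 'rV[C]_(1 + n)) : C := lsubmx q 0 0.
Definition ptof (n : nat) (q : 'rV[C]_(1 + n)) : 'rV[C]_n := rsubmx q.

Definition Mhat (n : nat) (U : 'rV[C]_n -> Prop) (q : 'rV[C]_(1 + n)) : Prop :=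
  z0of q != 0 /\ U (ptof q).

Definition Phi (n : nat) (phi : 'rV[C]_n -> 'rV[C]_(n + n))
  (F : 'rV[C]_n -> 'rV[C]_1) (q : 'rV[C]_(1 + n)) : 'rV[C]_((1 + n) + (1 + n)) :=
  let z0 := z0of q in
  let p := ptof q in
  let z := zpart (phi p) in
  let w := wpart (phi p) in
  z0 *: row_mx (row_mx (1 : 'rV[C]_1) z)
               (row_mx ((2 : C) *: F p - (z *m w^T)) w).

Definition cstar_act (n : nat) (l : C) (q : 'rV[C]_(1 + n)) : 'rV[C]_(1 + n) :=
  row_mx (l *: lsubmx q) (rsubmx q).

End Defs.

(* Main.v *)
Require Import Defs.
From HB Require Import structures.
From mathcomp Require Import all_boot all_order all_algebra.
From mathcomp Require Import reals.
From mathcomp Require Import complex.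
From mathcomp Require Import lra ring.
Import Order.TTheory GRing.Theory Num.Theory.
Local Open Scope ring_scope.
Set Implicit Arguments. Unset Strict Implicit. Unset Printing Implicit Defensive.
Section S.
Variable R : realType.
Local Notation C := R[i].
Definition nc (x : C) : R := complex.Re `|x|.
Lemma ncE (x : C) : `|x| = ((nc x)%:C)%C.
Proof. rewrite /nc RRe_real //. exact: normr_real. Qed.
Lemma nc_ge0 x : 0 <= nc x.
Proof. by have := normr_ge0 x; rewrite ncE ler0c. Qed.
Lemma ncM x y : nc (x * y) = nc x * nc y.
Proof. by apply: complexI; rewrite rmorphM -!ncE normrM. Qed.
Lemma ncD x y : nc (x + y) <= nc x + nc y.
Proof. by rewrite -lecR rmorphD -!ncE ler_normD. Qed.
Lemma ncN x : nc (- x) = nc x.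
Proof. by rewrite /nc normrN. Qed.
Lemma nc0 : nc 0 = 0.
Proof. by rewrite /nc normr0. Qed.
Lemma nc1 : nc 1 = 1.
Proof. by rewrite /nc normr1. Qed.
Definition rn k (v : 'rV[C]_k) : R := \sum_(i < k) nc (v 0 i).
Definition mn k m (L : 'M[C]_(k, m)) : R := \sum_(i < k) \sum_(j < m) nc (L i j).
Lemma cnormE k (v : 'rV[C]_k) : cnorm v = ((rn v)%:C)%C.
Proof. rewrite /cnorm /rn rmorph_sum; apply: eq_bigr => i _; exact: ncE. Qed.
Lemma rn_ge0 k (v : 'rV[C]_k) : 0 <= rn v.
Proof. by apply: sumr_ge0 => i _; exact: nc_ge0. Qed.
Lemma mn_ge0 k m (L : 'M[C]_(k, m)) : 0 <= mn L.
Proof. by apply: sumr_ge0 => i _; apply: sumr_ge0 => j _; exact: nc_ge0. Qed.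
Lemma rnD k (a b : 'rV[C]_k) : rn (a + b) <= rn a + rn b.
Proof. rewrite /rn -big_split /=; apply: ler_sum => i _; rewrite mxE; exact: ncD. Qed.
Lemma rnN k (a : 'rV[C]_k) : rn (- a) = rn a.
Proof. by apply: eq_bigr => i _; rewrite mxE ncN. Qed.
Lemma rnZ k c (a : 'rV[C]_k) : rn (c *: a) = nc c * rn a.
Proof. by rewrite /rn mulr_sumr; apply: eq_bigr => i _; rewrite mxE ncM. Qed.
Lemma rn0 k : rn (0 : 'rV[C]_k) = 0.
Proof. by rewrite /rn big1 // => i _; rewrite mxE nc0. Qed.
Lemma rn_row k1 k2 (a : 'rV[C]_k1) (b : 'rV[C]_k2) : rn (row_mx a b) = rn a + rn b.
Proof.
rewrite /rn big_split_ord /=; congr (_ + _); apply: eq_bigr => i _;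
  by rewrite ?row_mxEl ?row_mxEr.
Qed.
Lemma rn_entry k (v : 'rV[C]_k) i : nc (v 0 i) <= rn v.
Proof.
rewrite /rn (bigD1 i) //= lerDl; apply: sumr_ge0 => j _; exact: nc_ge0.
Qed.
Lemma nc_sum k (F : 'I_k -> C) : nc (\sum_i F i) <= \sum_i nc (F i).
Proof.
elim/big_ind2: _ => [|x1 x2 y1 y2 h1 h2|]; first by rewrite nc0.
  exact: le_trans (ncD _ _) (lerD h1 h2).
by [].
Qed.
Lemma rn_mul k m (h : 'rV[C]_k) (L : 'M[C]_(k, m)) : rn (h *m L) <= mn L * rn h.
Proof.
rewrite /rn /mn exchange_big /= mulr_suml; apply: ler_sum => j _.
rewrite mxE; apply: le_trans (nc_sum _) _; rewrite mulr_suml.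
apply: ler_sum => i _; rewrite ncM mulrC; apply: ler_wpM2l; first exact: nc_ge0.
exact: rn_entry.
Qed.
Lemma rn11 (x : 'rV[C]_1) : rn x = nc (x 0 0).
Proof. by rewrite /rn big_ord1. Qed.

Definition hd k m (f : 'rV[C]_k -> 'rV[C]_m) p (L : 'M[C]_(k, m)) :=
  forall eps : R, 0 < eps -> exists2 d : R, 0 < d &
    forall h, rn h < d -> rn (f (p + h) - f p - h *m L) <= eps * rn h.
Lemma hdP k m (f : 'rV[C]_k -> 'rV[C]_m) p L : hd f p L <-> has_cderiv f p L.
Proof.
split=> H eps /H [d d0 Hd]; exists d => // h.
  by rewrite !cnormE -rmorphM ltcR lecR; exact: Hd.
by have := Hd h; rewrite !cnormE -rmorphM ltcR lecR.
Qed.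
Lemma zm1 (V : zmodType) (a b c d e f : V) :
  (a + b) - (c + d) - (e + f) = (a - c - e) + (b - d - f).
Proof. rewrite !opprD !addrA -!addrA; congr (_ + _).
by rewrite addrCA; congr (_+_); rewrite [RHS]addrCA; congr (_+_); rewrite addrCA. Qed.

Lemma hd_exact k m (f : 'rV[C]_k -> 'rV[C]_m) p L :
  (forall h, f (p + h) - f p = h *m L) -> hd f p L.
Proof.
move=> H eps e0; exists 1 => // h _; rewrite H subrr rn0.
by apply: mulr_ge0; [exact: ltW | exact: rn_ge0].
Qed.

Lemma hd_add k m (f g : 'rV[C]_k -> 'rV[C]_m) p Lf Lg :
  hd f p Lf -> hd g p Lg -> hd (fun x => f x + g x) p (Lf + Lg).
Proof.
move=> Hf Hg eps e0.
have e2 : 0 < eps / 2 by rewrite divr_gt0.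
have [d1 d10 H1] := Hf _ e2; have [d2 d20 H2] := Hg _ e2.
exists (Num.min d1 d2); first by rewrite lt_min d10 d20.
move=> h; rewrite lt_min => /andP [h1 h2].
rewrite mulmxDr zm1; apply: le_trans (rnD _ _) _.
have := H1 _ h1; have := H2 _ h2; have := rn_ge0 h; lra.
Qed.

Lemma hd_post k m l (f : 'rV[C]_k -> 'rV[C]_m) p L (A : 'M[C]_(m, l)) :
  hd f p L -> hd (fun x => f x *m A) p (L *m A).
Proof.
move=> Hf eps e0.
have A0 := mn_ge0 A.
have e1 : 0 < eps / (mn A + 1) by rewrite divr_gt0 // ltr_wpDl.
have [d d0 H] := Hf _ e1; exists d => // h hd.
rewrite mulmxA -!mulmxBl; apply: le_trans (rn_mul _ _) _.
apply: le_trans (ler_wpM2l A0 (H _ hd)) _.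
have hh := rn_ge0 h.
rewrite mulrA; apply: ler_wpM2r => //.
rewrite mulrA ler_pdivrMr ?ltr_wpDl // mulrDr mulr1 mulrC lerDl; exact: ltW.
Qed.

Lemma hd_pre k k' m (f : 'rV[C]_k' -> 'rV[C]_m) p L (P : 'M[C]_(k, k')) :
  hd f (p *m P) L -> hd (fun x => f (x *m P)) p (P *m L).
Proof.
move=> Hf eps e0.
have P0 := mn_ge0 P.
have P1 : 0 < mn P + 1 by rewrite ltr_wpDl.
have e1 : 0 < eps / (mn P + 1) by rewrite divr_gt0.
have [d d0 H] := Hf _ e1; exists (d / (mn P + 1)); first by rewrite divr_gt0.
move=> h hd; have hh := rn_ge0 h.
have hP : rn (h *m P) < d.
  apply: le_lt_trans (rn_mul _ _) _.
  rewrite ltr_pdivlMr // in hd; apply: le_lt_trans hd.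
  rewrite mulrC ler_wpM2l // lerDl //.
rewrite mulmxDl mulmxA; apply: le_trans (H _ hP) _.
apply: le_trans (ler_wpM2l (ltW e1) (rn_mul _ _)) _.
rewrite mulrA; apply: ler_wpM2r => //.
rewrite mulrAC ler_pdivrMr // ler_wpM2l ?lerDl //; exact: ltW.
Qed.
Lemma small_mul (X eps t : R) : 0 <= X -> 0 < eps -> 0 <= t ->
  t <= eps / (2 * (X + 1)) -> X * t <= eps / 2.
Proof.
move=> X0 e0 t0 ht.
have X1 : 0 < 2 * (X + 1) by apply: mulr_gt0 => //; rewrite ltr_wpDl.
rewrite ler_pdivlMr // in ht.
have : X * t * 2 <= eps by nra.
by move=> H; rewrite ler_pdivlMr.
Qed.

Lemma hd_prod k a b c (B : 'rV[C]_a -> 'rV[C]_b -> 'rV[C]_c) (K : R)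
  (f : 'rV[C]_k -> 'rV[C]_a) (g : 'rV[C]_k -> 'rV[C]_b) p Lf Lg L :
  0 <= K -> (forall x y, rn (B x y) <= K * rn x * rn y) ->
  (forall x1 x2 y, B (x1 + x2) y = B x1 y + B x2 y) ->
  (forall x y1 y2, B x (y1 + y2) = B x y1 + B x y2) ->
  (forall h, h *m L = B (h *m Lf) (g p) + B (f p) (h *m Lg)) ->
  hd f p Lf -> hd g p Lg -> hd (fun x => B (f x) (g x)) p L.
Proof.
move=> K0 HB Bl Br HL Hf Hg eps e0.
set A := rn (f p); set G := rn (g p); set Mf := mn Lf; set Mg := mn Lg.
have A0 : 0 <= A by exact: rn_ge0.
have G0 : 0 <= G by exact: rn_ge0.
have Mf0 : 0 <= Mf by exact: mn_ge0.
have Mg0 : 0 <= Mg by exact: mn_ge0.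
set X := K * (A + G); set Y := K * (Mf + 1) * (Mg + 1).
have X0 : 0 <= X by rewrite mulr_ge0 // addr_ge0.
have Y0 : 0 <= Y by rewrite !mulr_ge0 // addr_ge0.
have eX : 0 < eps / (2 * (X + 1)).
  by rewrite divr_gt0 // mulr_gt0 // ltr_wpDl.
have eY : 0 < eps / (2 * (Y + 1)).
  by rewrite divr_gt0 // mulr_gt0 // ltr_wpDl.
set e := Num.min 1 (eps / (2 * (X + 1))).
have e0' : 0 < e by rewrite lt_min ltr01 eX.
have e1 : e <= 1 by rewrite ge_min lexx.
have eXb : X * e <= eps / 2.
  by apply: small_mul => //; [exact: ltW | rewrite ge_min lexx orbT].
have [d1 d10 H1] := Hf _ e0'; have [d2 d20 H2] := Hg _ e0'.
exists (Num.min (Num.min d1 d2) (eps / (2 * (Y + 1)))).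
  by rewrite !lt_min d10 d20 eY.
move=> h; rewrite !lt_min => /andP [/andP [h1 h2] h3].
have r0 := rn_ge0 h.
set rf := f (p + h) - f p - h *m Lf; set rg := g (p + h) - g p - h *m Lg.
have Ef : f (p + h) = f p + (h *m Lf + rf).
  by rewrite /rf; apply/rowP => j; rewrite !mxE; ring.
have Eg : g (p + h) = g p + (h *m Lg + rg).
  by rewrite /rg; apply/rowP => j; rewrite !mxE; ring.
have brf : rn rf <= e * rn h by exact: H1.
have brg : rn rg <= e * rn h by exact: H2.
have bDf : rn (h *m Lf + rf) <= (Mf + 1) * rn h.
  apply: le_trans (rnD _ _) _; have := rn_mul h Lf; rewrite -/Mf.
  have : e * rn h <= rn h by rewrite ler_piMl.
  lra.
have bDg : rn (h *m Lg + rg) <= (Mg + 1) * rn h.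
  apply: le_trans (rnD _ _) _; have := rn_mul h Lg; rewrite -/Mg.
  have : e * rn h <= rn h by rewrite ler_piMl.
  lra.
have Erem : B (f (p + h)) (g (p + h)) - B (f p) (g p) - h *m L =
    B (f p) rg + B rf (g p) + B (h *m Lf + rf) (h *m Lg + rg).
  rewrite HL [in B (f (p + h)) _]Ef Eg !Bl !Br.
  apply/rowP => j; rewrite !mxE; ring.
rewrite Erem; apply: le_trans (rnD _ _) _.
apply: le_trans (lerD (rnD _ _) (lexx _)) _.
have t1 : rn (B (f p) rg) <= K * A * (e * rn h).
  apply: le_trans (HB _ _) _; apply: ler_wpM2l => //; exact: mulr_ge0.
have t2 : rn (B rf (g p)) <= K * (e * rn h) * G.
  apply: le_trans (HB _ _) _; apply: ler_wpM2r => //; exact: ler_wpM2l.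
have t3 : rn (B (h *m Lf + rf) (h *m Lg + rg)) <= Y * rn h * rn h.
  apply: le_trans (HB _ _) _; rewrite /Y.
  suff -> : K * (Mf + 1) * (Mg + 1) * rn h * rn h =
      K * ((Mf + 1) * rn h * ((Mg + 1) * rn h)).
    by rewrite -mulrA; apply: ler_wpM2l => //; apply: ler_pM => //; exact: rn_ge0.
  ring.
have fin : e * rn h <= rn h by rewrite ler_piMl.
have Yb : Y * rn h <= eps / 2.
  apply: small_mul => //; exact: ltW.
have : K * A * (e * rn h) + K * (e * rn h) * G = X * e * rn h by rewrite /X; ring.
have : Y * rn h * rn h <= eps / 2 * rn h by apply: ler_wpM2r.
have : X * e * rn h <= eps / 2 * rn h by apply: ler_wpM2r.
lra.
Qed.
Lemma hd_ext k m (f g : 'rV[C]_k -> 'rV[C]_m) p L :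
  (forall x, f x = g x) -> hd f p L -> hd g p L.
Proof. by move=> E H eps /H [d d0 Hd]; exists d => // h; rewrite -!E; exact: Hd. Qed.
Lemma hd_eqL k m (f : 'rV[C]_k -> 'rV[C]_m) p L L' : L = L' -> hd f p L -> hd f p L'.
Proof. by move->. Qed.

Lemma mul_lcol k m n (L : 'M[C]_(k, m + n)) : L *m col_mx 1%:M 0 = lsubmx L.
Proof. by rewrite -{1}(hsubmxK L) mul_row_col mulmx1 mulmx0 addr0. Qed.
Lemma mul_rcol k m n (L : 'M[C]_(k, m + n)) : L *m col_mx 0 1%:M = rsubmx L.
Proof. by rewrite -{1}(hsubmxK L) mul_row_col mulmx1 mulmx0 add0r. Qed.

Lemma hd_const k m (v : 'rV[C]_m) (p : 'rV[C]_k) : hd (fun _ => v) p 0.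
Proof. by apply: hd_exact => h; rewrite subrr mulmx0. Qed.
Lemma hd_lsub k m n (f : 'rV[C]_k -> 'rV[C]_(m + n)) p L :
  hd f p L -> hd (fun x => lsubmx (f x)) p (lsubmx L).
Proof.
move=> H; apply: hd_eqL (mul_lcol L) _; apply: hd_ext (hd_post _ H) => x.
exact: mul_lcol.
Qed.
Lemma hd_rsub k m n (f : 'rV[C]_k -> 'rV[C]_(m + n)) p L :
  hd f p L -> hd (fun x => rsubmx (f x)) p (rsubmx L).
Proof.
move=> H; apply: hd_eqL (mul_rcol L) _; apply: hd_ext (hd_post _ H) => x.
exact: mul_rcol.
Qed.
Lemma hd_scale k m (f : 'rV[C]_k -> 'rV[C]_m) p L c :
  hd f p L -> hd (fun x => c *: f x) p (c *: L).
Proof.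
move=> H; apply: hd_eqL (mul_mx_scalar c L) _; apply: hd_ext (hd_post _ H) => x.
exact: mul_mx_scalar.
Qed.
Lemma hd_sub k m (f g : 'rV[C]_k -> 'rV[C]_m) p Lf Lg :
  hd f p Lf -> hd g p Lg -> hd (fun x => f x - g x) p (Lf - Lg).
Proof.
move=> Hf Hg; have := hd_add Hf (hd_scale (-1) Hg).
rewrite scaleN1r; apply: hd_ext => x; by rewrite scaleN1r.
Qed.
Lemma hd_row k m n (f : 'rV[C]_k -> 'rV[C]_m) (g : 'rV[C]_k -> 'rV[C]_n) p Lf Lg :
  hd f p Lf -> hd g p Lg -> hd (fun x => row_mx (f x) (g x)) p (row_mx Lf Lg).
Proof.
move=> Hf Hg.
have E : forall k' (a : 'M[C]_(k', m)) (b : 'M[C]_(k', n)),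
  a *m row_mx 1%:M 0 + b *m row_mx 0 1%:M = row_mx a b.
  by move=> k' a b; rewrite !mul_mx_row !mulmx1 !mulmx0 add_row_mx addr0 add0r.
apply: hd_eqL (E _ _ _) _; apply: hd_ext (hd_add (hd_post _ Hf) (hd_post _ Hg)) => x.
exact: E.
Qed.
Lemma hd_lsubid k n (q : 'rV[C]_(k + n)) : hd (fun x => lsubmx x) q (col_mx 1%:M 0).
Proof. apply: hd_exact => h. rewrite !mul_lcol. by rewrite -linearB /= addrC addKr. Qed.
Lemma hd_rsubin k n m (f : 'rV[C]_n -> 'rV[C]_m) (q : 'rV[C]_(k + n)) L :
  hd f (rsubmx q) L -> hd (fun x => f (rsubmx x)) q (col_mx 0 L).
Proof.
move=> H; rewrite -mul_rcol in H; have := hd_pre H.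
rewrite mul_col_mx mul0mx mul1mx; apply: hd_ext => x; by rewrite mul_rcol.
Qed.

Definition dot k (x y : 'rV[C]_k) : C := \sum_(i < k) x 0 i * y 0 i.
Lemma mul11 m (x : 'rV[C]_1) (y : 'rV[C]_m) : x *m y = x 0 0 *: y.
Proof. by rewrite [x]mx11_scalar mul_scalar_mx mxE eqxx mulr1n. Qed.
Lemma tr11 (x : 'M[C]_1) : x^T = x.
Proof. by apply/matrixP => i j; rewrite mxE !ord1. Qed.
Lemma dotE k (x y : 'rV[C]_k) : (x *m y^T) 0 0 = dot x y.
Proof. by rewrite mxE; apply: eq_bigr => i _; rewrite mxE. Qed.

Lemma hd_smul k m (s : 'rV[C]_k -> 'rV[C]_1) (g : 'rV[C]_k -> 'rV[C]_m) p Ls Lg :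
  hd s p Ls -> hd g p Lg ->
  hd (fun x => (s x) 0 0 *: g x) p (Ls *m g p + (s p) 0 0 *: Lg).
Proof.
move=> Hs Hg; apply: (hd_prod (B := fun x y => x 0 0 *: y) (K := 1) (Lf := Ls) (Lg := Lg)) => //.
- by move=> x y; rewrite rnZ rn11 mul1r.
- by move=> x1 x2 y; rewrite mxE scalerDl.
- by move=> x y1 y2; rewrite scalerDr.
- by move=> h; rewrite mulmxDr mulmxA mul11 scalemxAr.
Qed.

Lemma rn_dot k (x y : 'rV[C]_k) : nc (dot x y) <= rn x * rn y.
Proof.
apply: le_trans (nc_sum _) _; rewrite /rn mulr_suml; apply: ler_sum => i _.
rewrite ncM; apply: ler_wpM2l; [exact: nc_ge0 | exact: rn_entry].
Qed.

Lemma hd_dot k n (f g : 'rV[C]_k -> 'rV[C]_n) p Lf Lg :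
  hd f p Lf -> hd g p Lg ->
  hd (fun x => f x *m (g x)^T) p (Lf *m (g p)^T + Lg *m (f p)^T).
Proof.
move=> Hf Hg; apply: (hd_prod (B := fun x y => x *m y^T) (K := 1) (Lf := Lf) (Lg := Lg)) => //.
- by move=> x y; rewrite rn11 dotE mul1r; exact: rn_dot.
- by move=> x1 x2 y; rewrite mulmxDl.
- by move=> x y1 y2; rewrite linearD /= mulmxDr.
- move=> h; rewrite mulmxDr !mulmxA; congr (_ + _).
  by rewrite -[LHS]tr11 trmx_mul trmxK.
Qed.
Lemma dotC k (x y : 'rV[C]_k) : dot x y = dot y x.
Proof. by apply: eq_bigr => i _; rewrite mulrC. Qed.
Lemma dot_lin k (s1 s2 r1 r2 : C) (x1 x2 y1 y2 : 'rV[C]_k) :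
  dot (s1 *: x1 + s2 *: x2) (r1 *: y1 + r2 *: y2) =
  s1 * r1 * dot x1 y1 + s1 * r2 * dot x1 y2 + s2 * r1 * dot x2 y1 + s2 * r2 * dot x2 y2.
Proof.
rewrite /dot !mulr_sumr -!big_split /=; apply: eq_bigr => i _; rewrite !mxE; ring.
Qed.
Lemma OmegaE k (x y : 'rV[C]_(k + k)) :
  Omega x y = dot (zpart x) (wpart y) - dot (zpart y) (wpart x).
Proof. by rewrite /Omega /dot -sumrB. Qed.
Lemma Omega_rows n (a0 b0 a0' b0' : 'rV[C]_1) (a b a' b' : 'rV[C]_n) :
  Omega (row_mx (row_mx a0 a) (row_mx b0 b)) (row_mx (row_mx a0' a') (row_mx b0' b')) =
  a0 0 0 * b0' 0 0 - a0' 0 0 * b0 0 0 + (dot a b' - dot a' b).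
Proof.
rewrite OmegaE /zpart /wpart !row_mxKl !row_mxKr /dot !big_split_ord /= !big_ord1.
rewrite !row_mxEl.
have E : forall (u v : 'rV[C]_n), \sum_(i < n) row_mx a0 u 0 (rshift 1 i) *
   row_mx b0' v 0 (rshift 1 i) = \sum_(i < n) u 0 i * v 0 i.
  by move=> u v; apply: eq_bigr => i _; rewrite !row_mxEr.
have E' : forall (u v : 'rV[C]_n), \sum_(i < n) row_mx a0' u 0 (rshift 1 i) *
   row_mx b0 v 0 (rshift 1 i) = \sum_(i < n) u 0 i * v 0 i.
  by move=> u v; apply: eq_bigr => i _; rewrite !row_mxEr.
rewrite E E'; ring.
Qed.
Lemma lsub_mul k m n (v : 'rV[C]_k) (M : 'M[C]_(k, m + n)) : lsubmx (v *m M) = v *m lsubmx M.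
Proof. by rewrite -!mul_lcol mulmxA. Qed.
Lemma rsub_mul k m n (v : 'rV[C]_k) (M : 'M[C]_(k, m + n)) : rsubmx (v *m M) = v *m rsubmx M.
Proof. by rewrite -!mul_rcol mulmxA. Qed.
Lemma row_free_inj m k (A : 'M[C]_(m, k)) :
  (forall u : 'rV[C]_m, u *m A = 0 -> u = 0) -> row_free A.
Proof.
move=> H; rewrite -kermx_eq0; apply/eqP/row_matrixP => i; rewrite row0.
by apply: H; rewrite -row_mul mulmx_ker row0.
Qed.
Lemma mul_col0 k m (u : 'rV[C]_(k + m)) l (M : 'M[C]_(m, l)) :
  u *m col_mx 0 M = rsubmx u *m M.
Proof. by rewrite -{1}(hsubmxK u) mul_row_col mulmx0 add0r. Qed.
Lemma entry_comb m (a : C) (X Y Z : 'rV[C]_m) j :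
  (a *: X - (Y + Z)) 0 j = a * X 0 j - (Y 0 j + Z 0 j).
Proof. by rewrite !mxE. Qed.
Lemma entry_lin m (a b : C) (X Y : 'rV[C]_m) j :
  (a *: X + b *: Y) 0 j = a * X 0 j + b * Y 0 j.
Proof. by rewrite !mxE. Qed.
Lemma one11 : (1 : 'M[C]_1) 0 0 = 1.
Proof. by rewrite mxE. Qed.
Lemma zero11 : (0 : 'M[C]_1) 0 0 = 0.
Proof. by rewrite mxE. Qed.
End S.
Unset Implicit Arguments.

Theorem mainTheorem9 (R : realType) (n : nat) (U : 'rV[R[i]]_n -> Prop)
  (phi : 'rV[R[i]]_n -> 'rV[R[i]]_(n + n))
  (dphi : 'rV[R[i]]_n -> 'M[R[i]]_(n, n + n))
  (F : 'rV[R[i]]_n -> 'rV[R[i]]_1) (dF : 'rV[R[i]]_n -> 'M[R[i]]_(n, 1)) :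
  copen U ->
  special_kaehler_pair U phi dphi F dF ->
  (* C^*-equivariance *)
  (forall (l : R[i]) (q : 'rV[R[i]]_(1 + n)), l != 0 ->
      Phi phi F (cstar_act l q) = l *: Phi phi F q) /\
  (* holomorphic Lagrangian immersion of \hat M into (C^(2n+2), \hat Omega) *)
  (exists dPhi : 'rV[R[i]]_(1 + n) -> 'M[R[i]]_(1 + n, (1 + n) + (1 + n)),
      holo_on (Mhat U) (Phi phi F) dPhi /\
      forall q, Mhat U q ->
        row_free (dPhi q) /\
        (forall u v : 'rV[R[i]]_(1 + n),
            Omega (u *m dPhi q) (v *m dPhi q) = 0)).
Proof.
move=> _ [Hphi Himm Hlag Hnd [HF Hlio]].
pose Z p := zpart (phi p); pose W p := wpart (phi p).
pose Hf p := (2 : R[i]) *: F p - Z p *m (W p)^T.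
pose Gf p := row_mx (row_mx (1 : 'rV[R[i]]_1) (Z p)) (row_mx (Hf p) (W p)).
pose dZ p := lsubmx (dphi p); pose dW p := rsubmx (dphi p).
pose dH p := (2 : R[i]) *: dF p - (dZ p *m (W p)^T + dW p *m (Z p)^T).
pose dG p := row_mx (row_mx (0 : 'M[R[i]]_(n, 1)) (dZ p)) (row_mx (dH p) (dW p)).
pose dPhi q := col_mx 1%:M 0 *m Gf (ptof q) + z0of q *: col_mx 0 (dG (ptof q)).
split.
  move=> l q _; rewrite /Phi /cstar_act /z0of /ptof row_mxKl row_mxKr mxE.
  by rewrite scalerA.
exists dPhi; split.
  move=> q [_ Uq]; apply/hdP.
  have Hp : hd phi (ptof q) (dphi (ptof q)) by apply/hdP; exact: Hphi.
  have HFp : hd F (ptof q) (dF (ptof q)) by apply/hdP; exact: HF.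
  have HG : hd Gf (ptof q) (dG (ptof q)).
    apply: hd_row; first by apply: hd_row; [exact: hd_const | exact: hd_lsub Hp].
    apply: hd_row; last exact: hd_rsub Hp.
    apply: hd_sub; first exact: hd_scale.
    exact: hd_dot (hd_lsub Hp) (hd_rsub Hp).
  by apply: hd_ext (hd_smul (hd_lsubid q) (hd_rsubin HG)) => x.
move=> q [z0n Uq]; set p := ptof q; set z0 := z0of q.
have uE : forall u, u *m dPhi q = (lsubmx u) 0 0 *: Gf p + z0 *:
   row_mx (row_mx 0 (rsubmx u *m dZ p)) (row_mx (rsubmx u *m dH p) (rsubmx u *m dW p)).
  move=> u; rewrite mulmxDr mulmxA mul_lcol mul11 -scalemxAr mul_col0.
  by rewrite !mul_mx_row mulmx0.
split.
  apply: row_free_inj => u; rewrite uE => H0.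
  have t0 : (lsubmx u) 0 0 = 0.
    have := congr1 (fun X => (lsubmx (lsubmx X)) 0 0) H0.
    rewrite /= !linearD !linearZ /= !row_mxKl !mxE /=.
    by rewrite mulr1 mulr0 addr0.
  have lz : lsubmx u = 0 by apply/rowP => j; rewrite ord1 t0 mxE.
  rewrite t0 scale0r add0r in H0.
  have H1 := congr1 (fun X => z0^-1 *: X) H0.
  rewrite /= scalerA mulVf // scale1r scaler0 in H1.
  have ha := congr1 (fun X => rsubmx (lsubmx X)) H1.
  have hb := congr1 (fun X => rsubmx (rsubmx X)) H1.
  rewrite /= row_mxKl !row_mxKr linear0 linear0 in ha.
  rewrite /= !row_mxKr linear0 linear0 in hb.
  have hv : rsubmx u *m dphi p = 0.
    by rewrite -(hsubmxK (dphi p)) mul_mx_row -/(dZ p) -/(dW p) ha hb row_mx0.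
  have hv0 : rsubmx u = 0 by apply/eqP; rewrite -(mulmx_free_eq0 _ (Himm p Uq)) hv.
  by rewrite -(hsubmxK u) lz hv0 row_mx0.
move=> u1 u2; rewrite !uE.
set v1 := rsubmx u1; set v2 := rsubmx u2.
have Lag : dot (v1 *m dZ p) (v2 *m dW p) = dot (v2 *m dZ p) (v1 *m dW p).
  apply/eqP; rewrite -subr_eq0; apply/eqP.
  by have := Hlag p Uq v1 v2; rewrite OmegaE /zpart /wpart !lsub_mul !rsub_mul.
have cE : forall v, (v *m dH p) 0 0 =
    2 * dot (v *m dZ p) (W p) - (dot (v *m dZ p) (W p) + dot (Z p) (v *m dW p)).
  move=> v; rewrite /dH mulmxBr mulmxDr -scalemxAr !mulmxA entry_comb !dotE.
  rewrite Hlio // /liouville /zpart lsub_mul dotC (dotC _ (Z p)).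
  by [].
rewrite /Gf !scale_row_mx !add_row_mx Omega_rows !dot_lin !entry_lin !cE one11 zero11.
rewrite Lag; ring.
Qed.
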